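(* Let $r\ge 0$ and $n\ge 3r+1$ be integers, and let $F$ be a set of $r$ pairwise disjoint (independent) edges of the complete graph $K_n$. Then $m(K_n\setminus F)=r+2$, where $K_n\setminus F$ is the graph obtained from $K_n$ by deleting the edges in $F$.
   Context: All graphs are finite, simple and undirected. A list assignment $L$ for a graph $G$ assigns to each vertex $v$ a set $L(v)$ of colors; an $L$-coloring is a proper vertex coloring $c$ of $G$ with $c(v)\in L(v)$ for every vertex $v$. A $k$-list assignment is a list assignment with $|L(v)|=k$ for all $v$. $G$ is uniquely $k$-list colorable (U$k$LC) if there exists a $k$-list assignment $L$ such that $G$ has exactly one $L$-coloring. $G$ has property $M(k)$ if it is not U$k$LC, i.e. for every $k$-list assignment $L$, $G$ has either no $L$-coloring or at least two $L$-colorings. The m-number $m(G)$ is the least integer $k\ge 1$ such that $G$ has property $M(k)$. (Every U$k$LC graph is also U$(k-1)$LC, so $G$ is U$k$LC iff $k<m(G)$.) *)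

(* Defs.v *)
From mathcomp Require Import all_boot.
Set Implicit Arguments. Unset Strict Implicit. Unset Printing Implicit Defensive.

(* Colors are natural numbers (any countable supply suffices: a finite list
   assignment uses finitely many colors, which can be renamed into nat). *)

Definition simple_graph (T : finType) (adj : rel T) : Prop :=
  (forall x, ~~ adj x x) /\ (forall x y, adj x y = adj y x).

Definition k_list_assignment (T : finType) (k : nat) (L : T -> seq nat) : Prop :=
  forall v, uniq (L v) /\ size (L v) = k.

Definition L_coloring (T : finType) (adj : rel T) (L : T -> seq nat)
  (c : T -> nat) : Prop :=
  (forall v, c v \in L v) /\ (forall u v, adj u v -> c u != c v).

Definition unique_L_colorable (T : finType) (adj : rel T) (L : T -> seq nat) : Prop :=
  exists c, L_coloring adj L c /\
    forall c', L_coloring adj L c' -> forall v, c' v = c v.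

Definition UkLC (T : finType) (adj : rel T) (k : nat) : Prop :=
  exists L, k_list_assignment k L /\ unique_L_colorable adj L.

Definition propM (T : finType) (adj : rel T) (k : nat) : Prop := ~ UkLC adj k.

Definition is_m_number (T : finType) (adj : rel T) (m : nat) : Prop :=
  1 <= m /\ propM adj m /\ (forall k, 1 <= k -> k < m -> ~ propM adj k).

Definition Kn_minus (n : nat) (F : seq ('I_n * 'I_n)) : rel 'I_n :=
  fun x y => (x != y) && ~~ has (fun e => ((e.1 == x) && (e.2 == y)) ||
                                          ((e.1 == y) && (e.2 == x))) F.

Definition matching_of_size (n r : nat) (F : seq ('I_n * 'I_n)) : Prop :=
  uniq F /\ size F = r /\
  (forall e, e \in F -> e.1 != e.2) /\
  (forall e f, e \in F -> f \in F -> e != f ->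
     [/\ e.1 != f.1, e.1 != f.2, e.2 != f.1 & e.2 != f.2]).

(* Main.v *)
Require Import Defs.
From mathcomp Require Import all_boot zify.
Set Implicit Arguments. Unset Strict Implicit. Unset Printing Implicit Defensive.

Lemma exists_notin (s t : seq nat) : uniq s -> size t < size s ->
  exists2 x, x \in s & x \notin t.
Proof.
move=> us lt; case: (boolP (all (fun x => x \in t) s)) => [/allP H|].
  by have := uniq_leq_size us H; rewrite leqNgt lt.
by rewrite -has_predC => /hasP [x xs xt]; exists x.
Qed.

Lemma fixset_exists (T : finType) (f : T -> T) (S : {set T}) :
  S != set0 -> f @: S \subset S ->
  exists C : {set T}, [/\ C != set0, C \subset S & f @: C = C].
Proof.
move: {2}#|S| (leqnn #|S|) => k; elim: k S => [|k IH] S.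
  by rewrite leqn0 cards_eq0 => /eqP ->; rewrite eqxx.
move=> Hk S0 fS.
have [E|NE] := eqVneq (f @: S) S; first by exists S.
have pr : f @: S \proper S by rewrite properEneq NE fS.
have S1 : f @: S != set0.
  case/set0Pn: S0 => x xS; apply/set0Pn; exists (f x); exact: imset_f.
have [||C [C0 CS fC]] := IH (f @: S) _ S1.
- by move: pr; rewrite properEcard => /andP [_ lt]; rewrite -ltnS (leq_trans lt Hk).
- by apply: imsetS.
by exists C; split => //; apply: subset_trans CS (subset_trans fS _).
Qed.

Lemma noUnique (T : finType) (adj : rel T) (A : {set T}) (k : nat) :
  (forall x y, adj x y = adj y x) ->
  (forall x y, x \notin A -> y \notin A -> x != y -> adj x y) ->
  #|A| + 2 <= k -> (exists x, x \notin A) ->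
  propM adj k.
Proof.
move=> sym cl hk [x0 x0A] [L [HL [c [[cL cP] Hu]]]].
pose P u w := [&& w \notin A, adj u w, c w \in L u & [forall a in A, c a != c w]].
have HP : forall u, u \notin A -> exists w, P u w.
  move=> u uA.
  have [x xL xt] : exists2 x, x \in L u & x \notin (c u :: [seq c a | a <- enum A]).
    apply: exists_notin; first by case: (HL u).
    by case: (HL u) => _ ->; rewrite /= size_map -cardE; move: hk; rewrite addn2.
  rewrite inE negb_or in xt; case/andP: xt => xcu xA.
  case: (pickP (fun w => (w \notin A) && adj u w && (c w == x))) => [w /andP [/andP [wA uw] /eqP cw]|none].
    exists w; rewrite /P wA uw cw xL /=; apply/forallP => a; apply/implyP => aA.
    by apply: contra xA => /eqP <-; apply: map_f; rewrite mem_enum.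
  pose c1 v := if v == u then x else c v.
  have : L_coloring adj L c1.
    split.
      by move=> v; rewrite /c1; case: eqP => [->|]; [exact xL|move=> _; exact: cL].
    move=> v1 v2 a12; rewrite /c1.
    case: (eqVneq v1 u) => [e1|n1]; case: (eqVneq v2 u) => [e2|n2].
    - by have := cP _ _ a12; rewrite e1 e2 eqxx.
    - case: (boolP (v2 \in A)) => v2A.
        by apply: contra xA => /eqP ->; apply: map_f; rewrite mem_enum.
      have := none v2; rewrite v2A -e1 a12 /= => /negbT; by rewrite eq_sym.
    - case: (boolP (v1 \in A)) => v1A.
        by rewrite eq_sym; apply: contra xA => /eqP ->; apply: map_f; rewrite mem_enum.
      by have := none v1; rewrite v1A sym -e2 a12 /= => /negbT.
    - exact: cP.
  move=> /Hu /(_ u); rewrite /c1 eqxx => xe.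
  by move: xcu; rewrite xe eqxx.
pose f u := odflt u [pick w | P u w].
have Pf : forall u, u \notin A -> P u (f u).
  move=> u uA; rewrite /f; case: pickP => [w //|none].
  by have [w Pw] := HP u uA; have := none w; rewrite Pw.
have S0 : ~: A != set0 by apply/set0Pn; exists x0; rewrite inE.
have fS : f @: (~: A) \subset ~: A.
  apply/subsetP => y /imsetP [u]; rewrite inE => uA ->.
  by have := Pf u uA; rewrite inE => /andP [].
have [C [C0 CS fC]] := fixset_exists S0 fS.
have CA : forall v, v \in C -> v \notin A.
  by move=> v vC; have := subsetP CS v vC; rewrite inE.
have fCC : forall v, v \in C -> f v \in C by move=> v vC; rewrite -fC; apply: imset_f.
have finj : {in C &, injective f}.
  by apply/imset_injP; rewrite fC.
pose c' v := if v \in C then c (f v) else c v.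
have : L_coloring adj L c'.
  split.
    move=> v; rewrite /c'; case: ifP => vC; last exact: cL.
    by have := Pf v (CA v vC); case/and4P.
  move=> v1 v2 a12; rewrite /c'.
  case: ifP => v1C; case: ifP => v2C.
  - case: (eqVneq v1 v2) => [e|ne].
      by have := cP _ _ a12; rewrite e eqxx.
    apply: cP; apply: cl; try by apply: CA; apply: fCC.
    by apply: contra ne => /eqP /finj; move=> H; apply/eqP; apply: H.
  - case: (boolP (v2 \in A)) => v2A.
      have := Pf v1 (CA v1 v1C); case/and4P => _ _ _ /forallP /(_ v2).
      by move/implyP/(_ v2A); rewrite eq_sym.
    apply: cP; apply: cl => //; first by apply: CA; apply: fCC.
    by apply: contra (negbT v2C) => /eqP <-; apply: fCC.
  - case: (boolP (v1 \in A)) => v1A.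
      have := Pf v2 (CA v2 v2C); case/and4P => _ _ _ /forallP /(_ v1).
      by move/implyP/(_ v1A).
    apply: cP; apply: cl => //; first by apply: CA; apply: fCC.
    by apply: contra (negbT v1C) => /eqP ->; apply: fCC.
  - exact: cP.
move=> /Hu Hc'.
case/set0Pn: C0 => v vC.
have := Hc' v; rewrite /c' vC => e.
have := Pf v (CA v vC); case/and4P => _ avf _ _.
by have := cP _ _ avf; rewrite e eqxx.
Qed.

Lemma UkLC_down (T : finType) (adj : rel T) (k : nat) :
  1 <= k -> UkLC adj k.+1 -> UkLC adj k.
Proof.
move=> k1 [L [HL [c [[cL cP] Hu]]]].
pose L' v := c v :: take k.-1 (filter (predC1 (c v)) (L v)).
have sub : forall v x, x \in L' v -> x \in L v.
  move=> v x; rewrite inE => /orP [/eqP ->|]; first exact: cL.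
  by move/mem_take; rewrite mem_filter => /andP [].
exists L'; split.
  move=> v; case: (HL v) => uL sL.
  have sf : size (filter (predC1 (c v)) (L v)) = k.
    rewrite size_filter.
    have := count_predC (pred1 (c v)) (L v).
    rewrite sL count_uniq_mem // cL add1n => -[]. by [].
  split.
    rewrite /= take_uniq ?filter_uniq // andbT.
    by apply/negP => /mem_take; rewrite mem_filter /= eqxx.
  by rewrite /= size_take sf ltn_predL k1 prednK.
exists c; split.
  by split => // v; rewrite inE eqxx.
move=> c' [c'L c'P]; apply: Hu; split => // v; exact: sub (c'L v).
Qed.

Lemma UkLC_downto (T : finType) (adj : rel T) (m : nat) :
  UkLC adj m -> forall k, 1 <= k -> k <= m -> UkLC adj k.
Proof.
move=> Hm k k1; move Ed: (m - k) => d; elim: d k k1 Ed => [|d IH] k k1 Ed km.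
  by have -> : k = m by apply/eqP; rewrite eqn_leq km -subn_eq0 Ed.
apply: UkLC_down => //; apply: IH => //.
- by rewrite subnS Ed.
- by rewrite -subn_gt0 Ed.
Qed.

Definition dF_ n (F : seq ('I_n * 'I_n)) := forall e, e \in F -> e.1 != e.2.
Definition jF_ n (F : seq ('I_n * 'I_n)) := forall e f, e \in F -> f \in F -> e != f ->
     [/\ e.1 != f.1, e.1 != f.2, e.2 != f.1 & e.2 != f.2].

Lemma fst_inj n (F : seq ('I_n * 'I_n)) : jF_ F -> forall e f, e \in F -> f \in F -> e.1 = f.1 -> e = f.
Proof. move=> jF e f eF fF E; apply/eqP/negPn/negP => ne; by case: (jF e f eF fF ne); rewrite E eqxx. Qed.

Lemma snd_inj n (F : seq ('I_n * 'I_n)) : jF_ F -> forall e f, e \in F -> f \in F -> e.2 = f.2 -> e = f.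
Proof. move=> jF e f eF fF E; apply/eqP/negPn/negP => ne; by case: (jF e f eF fF ne); rewrite E eqxx. Qed.

Lemma fst_snd n (F : seq ('I_n * 'I_n)) : dF_ F -> jF_ F -> forall e f, e \in F -> f \in F -> e.1 != f.2.
Proof.
move=> dF jF e f eF fF; case: (eqVneq e f) => [->|ne]; first exact: dF.
by case: (jF e f eF fF ne).
Qed.

Definition isA n (F : seq ('I_n * 'I_n)) v := has (fun e => e.1 == v) F.
Definition isB n (F : seq ('I_n * 'I_n)) v := has (fun e => e.2 == v) F.
Definition ia n (F : seq ('I_n * 'I_n)) v := find (fun e => e.1 == v) F.
Definition ib n (F : seq ('I_n * 'I_n)) v := find (fun e => e.2 == v) F.

Lemma isA_E n (F : seq ('I_n * 'I_n)) (d : 'I_n * 'I_n) v : isA F v ->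
  [/\ ia F v < size F, nth d F (ia F v) \in F & (nth d F (ia F v)).1 = v].
Proof.
move=> h; have lt : ia F v < size F by rewrite /ia -has_find.
by split => //; [apply: mem_nth | apply/eqP; apply: (nth_find d h)].
Qed.

Lemma isB_E n (F : seq ('I_n * 'I_n)) (d : 'I_n * 'I_n) v : isB F v ->
  [/\ ib F v < size F, nth d F (ib F v) \in F & (nth d F (ib F v)).2 = v].
Proof.
move=> h; have lt : ib F v < size F by rewrite /ib -has_find.
by split => //; [apply: mem_nth | apply/eqP; apply: (nth_find d h)].
Qed.

Lemma adjI n (F : seq ('I_n * 'I_n)) v w : v != w ->
  (forall e, e \in F -> e.1 = v -> e.2 = w -> False) ->
  (forall e, e \in F -> e.1 = w -> e.2 = v -> False) -> Kn_minus F v w.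
Proof.
move=> ne h1 h2; rewrite /Kn_minus ne /=; apply/hasPn => e eF.
apply/negP => /orP [/andP [/eqP a /eqP b]|/andP [/eqP a /eqP b]]; [exact: h1 eF a b|exact: h2 eF a b].
Qed.

Lemma adj_irr n (F : seq ('I_n * 'I_n)) v : Kn_minus F v v = false.
Proof. by rewrite /Kn_minus eqxx. Qed.

Lemma adj_sym n (F : seq ('I_n * 'I_n)) v w : Kn_minus F v w = Kn_minus F w v.
Proof.
rewrite /Kn_minus eq_sym; congr (_ && ~~ _); apply: eq_has => e /=; by rewrite orbC.
Qed.

Definition sing n (F : seq ('I_n * 'I_n)) v := ~~ isA F v && ~~ isB F v.

Lemma adj_sing n (F : seq ('I_n * 'I_n)) v w : sing F w -> v != w -> Kn_minus F v w.
Proof.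
move=> /andP [nA nB] ne; apply: adjI => // e eF a b.
  by move/hasPn: nB => /(_ e eF); rewrite b eqxx.
by move/hasPn: nA => /(_ e eF); rewrite a eqxx.
Qed.

Lemma adj_AA n (F : seq ('I_n * 'I_n)) (d : 'I_n * 'I_n) v w : dF_ F -> jF_ F -> isA F v -> isA F w -> v != w -> Kn_minus F v w.
Proof.
move=> dF jF hv hw ne; have [_ fv ev] := isA_E d hv; have [_ fw ew] := isA_E d hw.
apply: adjI => // e eF a b.
  by have := fst_snd dF jF fw eF; rewrite b ew eqxx.
by have := fst_snd dF jF fv eF; rewrite b ev eqxx.
Qed.

Lemma adj_BB n (F : seq ('I_n * 'I_n)) (d : 'I_n * 'I_n) v w : dF_ F -> jF_ F -> isB F v -> isB F w -> v != w -> Kn_minus F v w.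
Proof.
move=> dF jF hv hw ne; have [_ fv ev] := isB_E d hv; have [_ fw ew] := isB_E d hw.
apply: adjI => // e eF a b.
  by have := fst_snd dF jF eF fv; rewrite a ev eqxx.
by have := fst_snd dF jF eF fw; rewrite a ew eqxx.
Qed.

Lemma A_notB n (F : seq ('I_n * 'I_n)) (d : 'I_n * 'I_n) v : dF_ F -> jF_ F -> isA F v -> ~~ isB F v.
Proof.
move=> dF jF hv; apply/negP => hb; have [_ fv ev] := isA_E d hv; have [_ fw ew] := isB_E d hb.
by have := fst_snd dF jF fv fw; rewrite ev ew eqxx.
Qed.

Lemma adj_AB n (F : seq ('I_n * 'I_n)) (d : 'I_n * 'I_n) v w : uniq F -> dF_ F -> jF_ F -> isA F v -> isB F w ->
  ia F v != ib F w -> Kn_minus F v w.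
Proof.
move=> uF dF jF hv hw ne; have [lv fv ev] := isA_E d hv; have [lw fw ew] := isB_E d hw.
apply: adjI.
- by apply/eqP => vw; have := fst_snd dF jF fv fw; rewrite ev ew vw eqxx.
- move=> e eF a b.
  have e1 := fst_inj jF eF fv (etrans a (esym ev)).
  have e2 := snd_inj jF eF fw (etrans b (esym ew)).
  by move: ne; rewrite -(nth_uniq d lv lw uF) -e1 -e2 eqxx.
- move=> e eF a b.
  by have := fst_snd dF jF eF fw; rewrite a ew eqxx.
Qed.

Lemma nadj_AB n (F : seq ('I_n * 'I_n)) (d : 'I_n * 'I_n) v w : isA F v -> isB F w ->
  ia F v = ib F w -> Kn_minus F v w = false.
Proof.
move=> hv hw E; have [lv fv ev] := isA_E d hv; have [lw fw ew] := isB_E d hw.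
rewrite /Kn_minus; apply/negbTE; rewrite negb_and !negbK; apply/orP; right.
apply/hasP; exists (nth d F (ia F v)) => //.
rewrite ev E ew. apply/orP; left. by rewrite !eqxx.
Qed.

Lemma clique_all (T : finType) (adj : rel T) (L : T -> seq nat) (c : T -> nat)
  (Q : {set T}) (pal : seq nat) :
  L_coloring adj L c -> (forall x y, x \in Q -> y \in Q -> x != y -> adj x y) ->
  (forall v, v \in Q -> {subset L v <= pal}) -> uniq pal -> size pal <= #|Q| ->
  forall x, x \in pal -> exists2 v, v \in Q & c v = x.
Proof.
move=> [cL cP] cl sub up sz x xp.
have u1 : uniq [seq c v | v <- enum Q].
  rewrite map_inj_in_uniq ?enum_uniq // => a b; rewrite !mem_enum => aQ bQ e.
  apply/eqP/negPn/negP => ne; by have := cP _ _ (cl a b aQ bQ ne); rewrite e eqxx.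
have s1 : {subset [seq c v | v <- enum Q] <= pal}.
  by move=> y /mapP [v]; rewrite mem_enum => vQ ->; exact: (sub v vQ _ (cL v)).
have [_ E] := uniq_min_size u1 s1 (ltac:(by rewrite size_map -cardE)).
by move: xp; rewrite -E => /mapP [v]; rewrite mem_enum => vQ ->; exists v.
Qed.

Definition SingSet n (F : seq ('I_n * 'I_n)) := [set v | sing F v].
Definition js n (F : seq ('I_n * 'I_n)) v := index v (enum (SingSet F)).
Definition LL n (F : seq ('I_n * 'I_n)) v :=
  if isA F v then iota 0 (size F).+1
  else if isB F v then ib F v :: iota (size F).+1 (size F)
  else rcons (iota 0 (size F)) (size F + js F v).
Definition cc n (F : seq ('I_n * 'I_n)) v :=
  if isA F v then ia F v else if isB F v then ib F v else size F + js F v.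

Lemma js_lt n (F : seq ('I_n * 'I_n)) v : sing F v -> js F v < #|SingSet F|.
Proof. by move=> h; rewrite /js cardE index_mem mem_enum inE. Qed.

Lemma js_nth n (F : seq ('I_n * 'I_n)) d1 v : sing F v -> nth d1 (enum (SingSet F)) (js F v) = v.
Proof. by move=> h; rewrite /js nth_index // mem_enum inE. Qed.

Lemma nth_sing n (F : seq ('I_n * 'I_n)) d1 j : j < #|SingSet F| ->
  sing F (nth d1 (enum (SingSet F)) j).
Proof.
move=> h; have : nth d1 (enum (SingSet F)) j \in enum (SingSet F) by apply: mem_nth; rewrite -cardE.
by rewrite mem_enum inE.
Qed.

Lemma klist n (F : seq ('I_n * 'I_n)) : k_list_assignment (size F).+1 (LL F).
Proof.
move=> v; rewrite /LL; case: ifP => _; first by rewrite iota_uniq size_iota.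
case: ifP => hB.
  rewrite /= iota_uniq size_iota mem_iota negb_and -ltnNge andbT.
  by rewrite /ib ltnW // ltnS -has_find.
rewrite rcons_uniq iota_uniq size_rcons size_iota mem_iota andbT.
by rewrite add0n -ltnNge leq_addr.
Qed.

Lemma B_notA n (F : seq ('I_n * 'I_n)) (d : 'I_n * 'I_n) v : dF_ F -> jF_ F -> isB F v -> ~~ isA F v.
Proof. by move=> dF jF hb; apply/negP => ha; move: (A_notB d dF jF ha); rewrite hb. Qed.

Lemma ia_inj n (F : seq ('I_n * 'I_n)) (d : 'I_n * 'I_n) u v : isA F u -> isA F v -> ia F u = ia F v -> u = v.
Proof. by move=> hu hv E; have [_ _ eu] := isA_E d hu; have [_ _ ev] := isA_E d hv; rewrite -eu -ev E. Qed.

Lemma ib_inj n (F : seq ('I_n * 'I_n)) (d : 'I_n * 'I_n) u v : isB F u -> isB F v -> ib F u = ib F v -> u = v.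
Proof. by move=> hu hv E; have [_ _ eu] := isB_E d hu; have [_ _ ev] := isB_E d hv; rewrite -eu -ev E. Qed.

Lemma cc_col n (F : seq ('I_n * 'I_n)) (d : 'I_n * 'I_n) : dF_ F -> jF_ F ->
  L_coloring (Kn_minus F) (LL F) (cc F).
Proof.
move=> dF jF; split.
  move=> v; rewrite /LL /cc; case: ifP => hA.
    by rewrite mem_iota /= ltnS ltnW // /ia -has_find.
  case: ifP => hB; first by rewrite inE eqxx.
  by rewrite mem_rcons inE eqxx.
have key : forall u v, Kn_minus F u v -> isA F u || isB F u -> cc F u != cc F v.
  move=> u v a huAB; rewrite /cc.
  case: (boolP (isA F u)) => huA; case: (boolP (isA F v)) => hvA;
    rewrite ?huA ?hvA ?(negbTE huA) ?(negbTE hvA) /=.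
  - by apply: contraTneq a => /(ia_inj d huA hvA) ->; rewrite adj_irr.
  - case: (boolP (isB F v)) => hvB; rewrite ?hvB ?(negbTE hvB).
      by apply: contraTneq a => /(nadj_AB d huA hvB) ->.
    by rewrite neq_ltn ltn_addr // /ia -has_find.
  - move: huAB; rewrite (negbTE huA) /= => huB; rewrite huB.
    apply: contraTneq a => E; rewrite adj_sym.
    by rewrite (nadj_AB d hvA huB (esym E)).
  - move: huAB; rewrite (negbTE huA) /= => huB; rewrite huB.
    case: (boolP (isB F v)) => hvB; rewrite ?hvB ?(negbTE hvB).
      by apply: contraTneq a => /(ib_inj d huB hvB) ->; rewrite adj_irr.
    by rewrite neq_ltn ltn_addr // /ib -has_find.
move=> u v a.
case: (boolP (isA F u || isB F u)) => h; first exact: key.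
case: (boolP (isA F v || isB F v)) => h'.
  by rewrite eq_sym; apply: key => //; rewrite adj_sym.
move: h h'; rewrite !negb_or => /andP [uA uB] /andP [vA vB].
rewrite /cc (negbTE uA) (negbTE uB) (negbTE vA) (negbTE vB) eqn_add2l.
apply: contraTneq a => E.
have : u = v.
  by rewrite -(js_nth (d.1) (ltac:(by rewrite /sing uA uB) : sing F u)) E js_nth // /sing vA vB.
by move=> ->; rewrite adj_irr.
Qed.

Lemma card_fst n (F : seq ('I_n * 'I_n)) : uniq F -> jF_ F -> #|[set e.1 | e in F]| = size F.
Proof.
move=> uF jF; rewrite card_in_imset; first by apply/card_uniqP.
move=> e f eF fF; exact: (fst_inj jF eF fF).
Qed.

Lemma card_snd n (F : seq ('I_n * 'I_n)) : uniq F -> jF_ F -> #|[set e.2 | e in F]| = size F.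
Proof.
move=> uF jF; rewrite card_in_imset; first by apply/card_uniqP.
move=> e f eF fF; exact: (snd_inj jF eF fF).
Qed.

Lemma mem_fst n (F : seq ('I_n * 'I_n)) v : (v \in [set e.1 | e in F]) = isA F v.
Proof.
apply/imsetP/hasP => [[e eF ->]|[e eF /eqP <-]]; by exists e.
Qed.

Lemma mem_snd n (F : seq ('I_n * 'I_n)) v : (v \in [set e.2 | e in F]) = isB F v.
Proof.
apply/imsetP/hasP => [[e eF ->]|[e eF /eqP <-]]; by exists e.
Qed.

Lemma card_Q n (F : seq ('I_n * 'I_n)) (X : {set 'I_n}) :
  #|X| = size F -> (forall v, v \in X -> ~~ sing F v) ->
  size F + #|SingSet F| <= #|X :|: SingSet F|.
Proof.
move=> cX hX; rewrite cardsU cX.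
suff -> : X :&: SingSet F = set0 by rewrite cards0 subn0.
apply/setP => v; rewrite !inE; apply/negP => /andP [vX vS].
by move: (hX v vX); rewrite vS.
Qed.

Lemma sing_big n (F : seq ('I_n * 'I_n)) : uniq F -> jF_ F -> 3 * size F + 1 <= n ->
  (size F).+1 <= #|SingSet F|.
Proof.
move=> uF jF hn.
have sub : ~: SingSet F \subset [set e.1 | e in F] :|: [set e.2 | e in F].
  apply/subsetP => v; rewrite !inE mem_fst mem_snd /sing negb_and !negbK; by [].
have c1 := subset_leq_card sub.
have c2 := leq_card_setU [set e.1 | e in F] [set e.2 | e in F].
have c6 := cardsC (SingSet F); rewrite card_ord in c6.
have c7 : #|~: SingSet F| <= 2 * size F.
  apply: (leq_trans c1); apply: (leq_trans c2).
  by rewrite card_fst // card_snd // mul2n addnn.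
move: c6 c7 hn; set a := #|SingSet F|; set b := #|~: SingSet F|.
move=> c6 c7 hn; lia.
Qed.

Lemma cc_unique n (F : seq ('I_n * 'I_n)) (d : 'I_n * 'I_n) :
  uniq F -> dF_ F -> jF_ F -> (size F).+1 <= #|SingSet F| ->
  forall c', L_coloring (Kn_minus F) (LL F) c' -> forall v, c' v = cc F v.
Proof.
move=> uF dF jF hm c' c'col; have [c'L c'P] := c'col.
set r := size F in hm *; set m := #|SingSet F| in hm *.
set S := enum (SingSet F).
have LA : forall v, isA F v -> c' v < r.+1.
  by move=> v h; have := c'L v; rewrite /LL h mem_iota.
have LB : forall v, isB F v -> (c' v = ib F v) \/ (r < c' v < r.*2.+1).
  move=> v h; have := c'L v; rewrite /LL (negbTE (B_notA d dF jF h)) h inE mem_iota.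
  case/orP => [/eqP ->|/andP [a b]]; [by left|right].
  by rewrite a /= -addnn -addSn.
have LS : forall v, sing F v -> (c' v = r + js F v) \/ (c' v < r).
  move=> v /andP [hA hB]; have := c'L v; rewrite /LL (negbTE hA) (negbTE hB) mem_rcons inE mem_iota.
  by case/orP => [/eqP ->|/andP [_ b]]; [left|right].
have isSing : forall v, ~~ isA F v -> ~~ isB F v -> sing F v by move=> v a b; rewrite /sing a b.
have ibr : forall v, isB F v -> ib F v < r by move=> v h; rewrite /ib -has_find.
have iar : forall v, isA F v -> ia F v < r by move=> v h; rewrite /ia -has_find.
have cl1 : forall x y, x \in [set e.1 | e in F] :|: SingSet F -> y \in [set e.1 | e in F] :|: SingSet F ->
    x != y -> Kn_minus F x y.
  move=> x y; rewrite !in_setU !mem_fst !inE => /orP [hx|hx] /orP [hy|hy] ne.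
  - exact: (@adj_AA n F d x y dF jF hx hy ne).
  - exact: adj_sing.
  - by rewrite adj_sym; apply: adj_sing => //; rewrite eq_sym.
  - exact: adj_sing.
have cl2 : forall x y, x \in [set e.2 | e in F] :|: SingSet F -> y \in [set e.2 | e in F] :|: SingSet F ->
    x != y -> Kn_minus F x y.
  move=> x y; rewrite !in_setU !mem_snd !inE => /orP [hx|hx] /orP [hy|hy] ne.
  - exact: (@adj_BB n F d x y dF jF hx hy ne).
  - exact: adj_sing.
  - by rewrite adj_sym; apply: adj_sing => //; rewrite eq_sym.
  - exact: adj_sing.
have subS : forall v, sing F v -> {subset LL F v <= iota 0 (r + m)}.
  move=> v /andP [hA hB] x; rewrite /LL (negbTE hA) (negbTE hB) mem_rcons inE !mem_iota /=.
  case/orP => [/eqP ->|b].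
    by rewrite ltn_add2l; apply: js_lt; rewrite /sing hA hB.
  by move: b; rewrite ?add0n => b; apply: leq_trans b _; rewrite leq_addr.
have sub1 : forall v, v \in [set e.1 | e in F] :|: SingSet F -> {subset LL F v <= iota 0 (r + m)}.
  move=> v; rewrite !in_setU mem_fst !inE => /orP [hA|hS]; last exact: subS.
  move=> x; rewrite /LL hA !mem_iota /= ?add0n => b.
  by apply: leq_trans b _; lia.
have sub2 : forall v, v \in [set e.2 | e in F] :|: SingSet F -> {subset LL F v <= iota 0 (r + m)}.
  move=> v; rewrite !in_setU mem_snd !inE => /orP [hB|hS]; last exact: subS.
  move=> x; rewrite /LL (negbTE (B_notA d dF jF hB)) hB inE !mem_iota /=.
  case/orP => [/eqP ->|/andP [_ b]].
    by apply: leq_trans (ibr _ hB) _; lia.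
  by apply: leq_trans b _; lia.
have Q1c : size (iota 0 (r + m)) <= #|[set e.1 | e in F] :|: SingSet F|.
  rewrite size_iota; apply: card_Q; first exact: card_fst.
  by move=> v; rewrite mem_fst /sing => ->.
have Q2c : size (iota 0 (r + m)) <= #|[set e.2 | e in F] :|: SingSet F|.
  rewrite size_iota; apply: card_Q; first exact: card_snd.
  by move=> v; rewrite mem_snd /sing => ->; rewrite andbF.
have pal : forall x, x < r + m -> x \in iota 0 (r + m) by move=> x; rewrite mem_iota.
have stepA : forall j, 0 < j < m -> c' (nth d.1 S j) = r + j.
  move=> j /andP [j0 jm].
  have [v vQ cv] := clique_all c'col cl1 sub1 (iota_uniq 0 (r + m)) Q1c (pal (r + j) (ltac:(by rewrite ltn_add2l))).
  move: vQ; rewrite !in_setU mem_fst !inE => /orP [hA|hS].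
    by have := LA v hA; rewrite cv ltnS -{2}(addn0 r) leq_add2l leqn0 => /eqP j00; rewrite j00 in j0.
  case: (LS v hS) => e.
    have ej : j = js F v by apply/eqP; rewrite -(eqn_add2l r) -cv e.
    by rewrite ej js_nth.
  by move: e; rewrite cv ltnNge leq_addr.
have [w0 w0S w0c] : exists2 w, sing F w & c' w = r.
  have [v vQ cv] := clique_all c'col cl2 sub2 (iota_uniq 0 (r + m)) Q2c (pal r (ltac:(lia))).
  move: vQ; rewrite !in_setU mem_snd !inE => /orP [hB|hS]; last by exists v.
  case: (LB v hB) => e.
    by have := ibr v hB; rewrite -e cv ltnn.
  by move: e; rewrite cv ltnn.
have stepC : forall v, isB F v -> c' v = ib F v.
  move=> v hB; case: (LB v hB) => // /andP [a b].
  set k := c' v - r.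
  have k0 : 0 < k < m by rewrite /k; lia.
  have hw := nth_sing d.1 (ltac:(lia) : k < m).
  have cw := stepA k k0.
  have : Kn_minus F v (nth d.1 S k).
    apply: adj_sing => //; apply/eqP => E; move: hw; by rewrite -E /sing hB andbF.
  move=> Hadj; have := c'P _ _ Hadj; rewrite cw /k subnKC ?eqxx //; lia.
have bj : forall j, j < r -> exists2 w, isB F w & ib F w = j.
  move=> j jr; exists (nth d F j).2.
    by apply/hasP; exists (nth d F j) => //; apply: mem_nth.
  have hB : isB F (nth d F j).2 by apply/hasP; exists (nth d F j) => //; apply: mem_nth.
  have [l1 f1 e1] := isB_E d hB.
  have := snd_inj jF f1 (mem_nth d jr) e1.
  by move/eqP; rewrite nth_uniq // => /eqP.
have stepS : forall v, sing F v -> c' v = r + js F v.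
  move=> v hS; case: (LS v hS) => // lt.
  have [w wB wj] := bj _ lt.
  have : Kn_minus F w v.
    apply: adj_sing => //; apply/eqP => E; move: hS; by rewrite -E /sing wB andbF.
  by move=> Hadj; have := c'P _ _ Hadj; rewrite (stepC w wB) wj eqxx.
have stepD : forall v, isA F v -> c' v = ia F v.
  move=> v hA; have := LA v hA; rewrite ltnS leq_eqVlt => /orP [/eqP e|lt].
    have : Kn_minus F v w0.
      apply: adj_sing => //; apply/eqP => E; move: w0S; by rewrite -E /sing hA.
    by move=> Hadj; have := c'P _ _ Hadj; rewrite e w0c eqxx.
  apply/eqP/negPn/negP => ne.
  have [w wB wj] := bj _ lt.
  have : Kn_minus F v w by apply: adj_AB => //; rewrite wj eq_sym.
  by move=> Hadj; have := c'P _ _ Hadj; rewrite (stepC w wB) wj eqxx.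
move=> v; rewrite /cc.
case: (boolP (isA F v)) => hA; first exact: stepD.
case: (boolP (isB F v)) => hB; first exact: stepC.
exact: stepS (isSing v hA hB).
Qed.
Unset Implicit Arguments.

Theorem proposition2p5 (r n : nat) (F : seq ('I_n * 'I_n)) :
  3 * r + 1 <= n -> matching_of_size r F ->
  is_m_number (Kn_minus F) (r + 2).
Proof.
move=> hn [uF [sF [dF jF]]]; subst r.
have n0 : 0 < n by lia.
pose d := (Ordinal n0, Ordinal n0).
split; first by rewrite addn2.
split.
  apply: (@noUnique _ _ [set e.1 | e in F]).
  - exact: adj_sym.
  - move=> x y xA yA ne; apply: adjI => // e eF a b.
      by move: xA; rewrite -a; rewrite (imset_f (fun e : 'I_n * 'I_n => e.1) eF).
    by move: yA; rewrite -a; rewrite (imset_f (fun e : 'I_n * 'I_n => e.1) eF).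
  - by rewrite card_fst.
  - have := cardsC [set e.1 | e in F]; rewrite card_fst // card_ord => h.
    have : ~: [set e.1 | e in F] != set0 by rewrite -card_gt0; lia.
    by case/set0Pn => x; rewrite inE => xA; exists x.
move=> k k1 kl HP; apply: HP.
apply: (UkLC_downto (m := (size F).+1)) => //; last by lia.
exists (LL F); split; first exact: klist.
exists (cc F); split; first exact: (cc_col d).
move=> c' Hc' v; apply: (cc_unique d) => //.
exact: sing_big.
Qed.
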